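(* If a CFSTR contains a self-catalyzing reaction, then it fails the Jacobian Criterion. Conversely, if a CFSTR $\mathfrak{G}$ with non-flow subnetwork $G$ contains no self-catalyzing reaction, then $\mathfrak{G}$ passes the Jacobian Criterion if and only if every $k$-square embedded network of $G$ with $k\ge2$ has nonnegative orientation.
   Context: A chemical reaction network has species $X_1,\dots,X_s$ and reactions $y\to y'$ with $y,y'\in\mathbb{Z}_{\ge0}^s$, $y\ne y'$. Flow reactions are $0\to X_i$ and $X_i\to0$; others are non-flow. A CFSTR contains $X_i\to0$ for every species; its non-flow subnetwork consists of its non-flow reactions. A reaction $y\to y'$ is self-catalyzing if some species $X_j$ has $1\le y_j<y'_j$. For a list of $n$ reactions $y_k\to y'_k$ on $n$ species: reactant matrix $M$ (row $k$ is $y_k$), reaction matrix $R$ (row $k$ is $y_k-y'_k$), orientation $\operatorname{sign}(\det M\det R)$; empty network has orientation $+1$. A $k$-square embedded network of $G$ is given by $k$ species $S$ and $k$ non-flow reactions of $G$, restricted by deleting all species not in $S$ from both complexes (as a list). A CFSTR with $s$ species passes the Jacobian Criterion if every choice of $s$ distinct non-inflow reactions yields $s\times s$ reactant and reaction matrices (columns indexed by all species) with nonnegative orientation. *)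

(* Defs.v *)
From mathcomp Require Import all_boot all_order all_algebra.
Set Implicit Arguments. Unset Strict Implicit. Unset Printing Implicit Defensive.
Import Order.TTheory GRing.Theory Num.Theory.
Local Open Scope ring_scope.

(* Species are 'I_s; a complex is a vector in Z_{>=0}^s. *)
Definition complex (s : nat) := {ffun 'I_s -> nat}.
(* A reaction y -> y' is the pair (y, y'). *)
Definition reaction (s : nat) := (complex s * complex s)%type.

Definition zero_cplx (s : nat) : complex s := [ffun _ => 0%N].
Definition unit_cplx (s : nat) (i : 'I_s) : complex s := [ffun j => nat_of_bool (j == i)].

Definition is_inflow (s : nat) (r : reaction s) : bool :=
  (r.1 == zero_cplx s) && [exists i, r.2 == unit_cplx i].
Definition is_outflow (s : nat) (r : reaction s) : bool :=
  (r.2 == zero_cplx s) && [exists i, r.1 == unit_cplx i].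
Definition is_flow (s : nat) (r : reaction s) : bool := is_inflow r || is_outflow r.

Definition network (s : nat) (N : seq (reaction s)) : Prop :=
  uniq N /\ all (fun r : reaction s => r.1 != r.2) N.

Definition is_CFSTR (s : nat) (N : seq (reaction s)) : Prop :=
  network N /\ forall i : 'I_s, (unit_cplx i, zero_cplx s) \in N.

Definition nonflow_sub (s : nat) (N : seq (reaction s)) : seq (reaction s) :=
  [seq r <- N | ~~ is_flow r].

Definition self_catalyzing (s : nat) (r : reaction s) : bool :=
  [exists j : 'I_s, (0 < r.1 j)%N && (r.1 j < r.2 j)%N].

Definition reactant_mx (s n : nat) (rs : 'I_n -> reaction s) (cols : 'I_n -> 'I_s)
  : 'M[int]_n := \matrix_(k, j) (((rs k).1 (cols j))%:Z).
Definition reaction_mx (s n : nat) (rs : 'I_n -> reaction s) (cols : 'I_n -> 'I_s)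
  : 'M[int]_n := \matrix_(k, j) (((rs k).1 (cols j))%:Z - ((rs k).2 (cols j))%:Z).

(* orientation = sign(det M * det R); equals 1 for n = 0 *)
Definition orientation (s n : nat) (rs : 'I_n -> reaction s) (cols : 'I_n -> 'I_s) : int :=
  sgz (\det (reactant_mx rs cols) * \det (reaction_mx rs cols)).

Definition passes_JC (s : nat) (N : seq (reaction s)) : Prop :=
  forall rs : 'I_s -> reaction s,
    injective rs -> (forall k, rs k \in N) -> (forall k, ~~ is_inflow (rs k)) ->
    0 <= orientation rs id.

(* k-square embedded network of G: k distinct species S (given by an injection
   'I_k -> 'I_s) and k distinct reactions of G, restricted to the species in S;
   its orientation is orientation rs S. *)
Definition embedded_nonneg (s : nat) (G : seq (reaction s)) (k : nat) : Prop :=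
  forall (S : 'I_k -> 'I_s) (rs : 'I_k -> reaction s),
    injective S -> injective rs -> (forall i, rs i \in G) ->
    0 <= orientation rs S.

(* Main.v *)
Require Import Defs.
From mathcomp Require Import all_boot all_order all_algebra all_fingroup.
Set Implicit Arguments. Unset Strict Implicit. Unset Printing Implicit Defensive.
Import Order.TTheory GRing.Theory Num.Theory.

Section Aux.
Local Open Scope ring_scope.

Lemma det_unit_row n (A : 'M[int]_n.+1) i j :
  (forall j', A i j' = (j' == j)%:R) ->
  \det A = (-1) ^+ (i + j) * \det (row' i (col' j A)).
Proof.
move=> H; rewrite (expand_det_row A i) (bigD1 j) //= big1 ?addr0.
  by rewrite H eqxx mul1r.
by move=> k /negbTE nk; rewrite H nk mul0r.
Qed.

Lemma det_zero_row n (A : 'M[int]_n) i :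
  (forall j', A i j' = 0) -> \det A = 0.
Proof.
by move=> H; rewrite (expand_det_row A i) big1 // => k _; rewrite H mul0r.
Qed.

Lemma det_conj_perm n (A : 'M[int]_n) (p : {perm 'I_n}) :
  \det (row_perm p (col_perm p A)) = \det A.
Proof.
rewrite row_permE col_permE !det_mulmx !det_perm odd_permV.
by case: (odd_perm p); rewrite ?expr1 ?expr0 ?mulN1r ?mulrN1 ?opprK ?mul1r ?mulr1.
Qed.
End Aux.

Section Main.
Local Open Scope ring_scope.
Variable s : nat.

Lemma unit_cplxE (i j : 'I_s) : unit_cplx i j = nat_of_bool (j == i).
Proof. by rewrite ffunE. Qed.

Lemma zero_cplxE (j : 'I_s) : zero_cplx s j = 0%N.
Proof. by rewrite ffunE. Qed.

Lemma unit_cplx_inj : injective (@unit_cplx s).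
Proof.
move=> i c H; have := congr1 (fun f : complex s => f i) H; rewrite !unit_cplxE eqxx.
by case: eqP.
Qed.

Lemma outflowP (r : reaction s) :
  is_outflow r -> exists i, r = (unit_cplx i, zero_cplx s).
Proof.
by case: r => a b /andP[/eqP /= -> /existsP[i /eqP /= ->]]; exists i.
Qed.

Lemma outflow_unit (i : 'I_s) : is_outflow (unit_cplx i, zero_cplx s).
Proof. by apply/andP; split => //; apply/existsP; exists i. Qed.

Lemma not_inflow_unit (i : 'I_s) : ~~ is_inflow (unit_cplx i, zero_cplx s).
Proof.
apply/negP => /andP[/eqP /= H _].
by have := congr1 (fun f : complex s => f i) H; rewrite unit_cplxE zero_cplxE eqxx.
Qed.

Lemma orientation_ext n (rs rs' : 'I_n -> reaction s) (cols cols' : 'I_n -> 'I_s) :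
  (forall k, rs k = rs' k) -> (forall j, cols j = cols' j) ->
  orientation rs cols = orientation rs' cols'.
Proof.
move=> H1 H2; rewrite /orientation.
have -> : reactant_mx rs cols = reactant_mx rs' cols'.
  by apply/matrixP => a b; rewrite !mxE H1 H2.
have -> : reaction_mx rs cols = reaction_mx rs' cols'.
  by apply/matrixP => a b; rewrite !mxE H1 H2.
by [].
Qed.

Lemma orient_outflow n (rs : 'I_n.+1 -> reaction s) cols i j c :
  injective cols -> rs i = (unit_cplx c, zero_cplx s) -> cols j = c ->
  orientation rs cols =
  orientation (fun k => rs (lift i k)) (fun k => cols (lift j k)).
Proof.
move=> Hinj Hi Hj; rewrite /orientation.
have E : forall j', (cols j' == c) = (j' == j).
  by move=> j'; rewrite -Hj (inj_eq Hinj).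
rewrite (@det_unit_row _ (reactant_mx rs cols) i j); last first.
  by move=> j'; rewrite mxE Hi /= unit_cplxE E; case: (j' == j).
rewrite (@det_unit_row _ (reaction_mx rs cols) i j); last first.
  by move=> j'; rewrite mxE Hi /= unit_cplxE zero_cplxE E subr0; case: (j' == j).
rewrite mulrACA -exprD addnn -mul2n exprM sqrrN expr1n mul1r.
have -> : row' i (col' j (reactant_mx rs cols)) = reactant_mx (fun k => rs (lift i k)) (fun k => cols (lift j k)).
  by apply/matrixP => a b; rewrite !mxE.
have -> : row' i (col' j (reaction_mx rs cols)) = reaction_mx (fun k => rs (lift i k)) (fun k => cols (lift j k)).
  by apply/matrixP => a b; rewrite !mxE.
by [].
Qed.

Lemma orient_outflow0 n (rs : 'I_n -> reaction s) cols i c :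
  rs i = (unit_cplx c, zero_cplx s) -> (forall j, cols j != c) ->
  orientation rs cols = 0.
Proof.
move=> Hi Hj; rewrite /orientation (@det_zero_row _ (reactant_mx rs cols) i).
  by rewrite mul0r sgz0.
by move=> j'; rewrite mxE Hi /= unit_cplxE (negbTE (Hj j')).
Qed.

End Main.

Section Ext.
Local Open Scope ring_scope.
Variable s : nat.

Lemma exists_notin n (cols : 'I_n -> 'I_s) :
  injective cols -> (n < s)%N -> exists c, forall j, cols j != c.
Proof.
move=> Hinj Hlt.
case: (pickP [pred c | c \notin codom cols]) => [c Hc | H0].
  by exists c => j; apply/eqP => E; move: Hc; rewrite /= -E codom_f.
have : (#|'I_s| <= #|codom cols|)%N.
  by apply: subset_leq_card; apply/subsetP => x _; move: (H0 x) => /= /negbFE.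
by rewrite card_ord card_codom // card_ord leqNgt Hlt.
Qed.

Lemma ext_lemma m : forall n (rs : 'I_n -> reaction s) (cols : 'I_n -> 'I_s),
  (n + m)%N = s -> injective cols -> injective rs ->
  (forall k i, rs k = (unit_cplx i, zero_cplx s) -> exists j, cols j = i) ->
  exists rs' : 'I_s -> reaction s, [/\ injective rs',
     (forall k, (exists i, rs' k = (unit_cplx i, zero_cplx s)) \/ (exists k', rs' k = rs k')) &
     orientation rs' id = orientation rs cols].
Proof.
elim: m => [|m IH] n rs cols Hs Hc Hr Hout.
  move: Hs; rewrite addn0 => Hs; subst s.
  pose p := perm Hc.
  exists (fun k => rs ((p^-1)%g k)); split.
  - by move=> a b /Hr /perm_inj.
  - by move=> k; right; exists ((p^-1)%g k).
  rewrite /orientation.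
  have -> : reactant_mx rs cols = row_perm p (col_perm p (reactant_mx (fun k => rs ((p^-1)%g k)) id)).
    by apply/matrixP => a b; rewrite !mxE permK !permE.
  have -> : reaction_mx rs cols = row_perm p (col_perm p (reaction_mx (fun k => rs ((p^-1)%g k)) id)).
    by apply/matrixP => a b; rewrite !mxE permK !permE.
  by rewrite !det_conj_perm.
have [c Hcn] : exists c, forall j, cols j != c.
  by apply: exists_notin => //; rewrite -Hs -addSnnS leq_addr.
pose rs1 := fun k : 'I_n.+1 => if unlift ord0 k is Some k' then rs k' else (unit_cplx c, zero_cplx s).
pose cols1 := fun k : 'I_n.+1 => if unlift ord0 k is Some k' then cols k' else c.
have Hrs1 : forall k, rs1 (lift ord0 k) = rs k by move=> k; rewrite /rs1 liftK.
have Hcols1 : forall k, cols1 (lift ord0 k) = cols k by move=> k; rewrite /cols1 liftK.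
have Hrs0 : rs1 ord0 = (unit_cplx c, zero_cplx s) by rewrite /rs1 unlift_none.
have Hcols0 : cols1 ord0 = c by rewrite /cols1 unlift_none.
have Hne : forall k, rs k <> (unit_cplx c, zero_cplx s).
  by move=> k /Hout [j Hj]; move: (Hcn j); rewrite Hj eqxx.
have Hc1 : injective cols1.
  move=> a b; case: (unliftP ord0 a) => [a'|] ->; case: (unliftP ord0 b) => [b'|] ->;
    rewrite ?Hcols1 ?Hcols0.
  + by move/Hc => ->.
  + by move=> E; move: (Hcn a'); rewrite E eqxx.
  + by move=> E; move: (Hcn b'); rewrite E eqxx.
  + by [].
have Hr1 : injective rs1.
  move=> a b; case: (unliftP ord0 a) => [a'|] ->; case: (unliftP ord0 b) => [b'|] ->;
    rewrite ?Hrs1 ?Hrs0.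
  + by move/Hr => ->.
  + by move/Hne.
  + by move=> E; have := Hne b'; rewrite -E.
  + by [].
have Hout1 : forall k i, rs1 k = (unit_cplx i, zero_cplx s) -> exists j, cols1 j = i.
  move=> k i; case: (unliftP ord0 k) => [k'|] ->; rewrite ?Hrs1 ?Hrs0.
    by move/Hout => [j Hj]; exists (lift ord0 j); rewrite Hcols1.
  by case => /unit_cplx_inj <-; exists ord0.
have [rs' [H1 H2 H3]] := IH n.+1 rs1 cols1 (etrans (addSnnS n m) Hs) Hc1 Hr1 Hout1.
exists rs'; split => //.
- move=> k; case: (H2 k) => [|[k' Hk']]; first by left.
  move: Hk'; case: (unliftP ord0 k') => [k''|] -> ->; rewrite ?Hrs1 ?Hrs0.
    by right; exists k''.
  by left; exists c.
rewrite H3 (@orient_outflow _ _ rs1 cols1 ord0 ord0 c) //.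
  by apply: orientation_ext.
Qed.

End Ext.

Section PL.
Local Open Scope ring_scope.
Variable s : nat.
Variable N : seq (reaction s).
Hypothesis Hnsc : forall r, r \in N -> ~~ self_catalyzing r.
Hypothesis Hemb : forall k : nat, (2 <= k)%N -> embedded_nonneg (nonflow_sub N) k.

Lemma P_noout n (rs : 'I_n -> reaction s) (cols : 'I_n -> 'I_s) :
  injective cols -> injective rs -> (forall k, rs k \in N) ->
  (forall k, ~~ is_inflow (rs k)) -> (forall k, ~~ is_outflow (rs k)) ->
  0 <= orientation rs cols.
Proof.
move=> Hc Hr HN Hin Hout.
have Hnf : forall k, rs k \in nonflow_sub N.
  by move=> k; rewrite mem_filter /is_flow negb_or Hin Hout HN.
case: n rs cols Hc Hr HN Hin Hout Hnf => [|[|n]] rs cols Hc Hr HN Hin Hout Hnf.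
- by rewrite /orientation !det_mx00 mulr1 sgz1.
- rewrite /orientation !det_mx11 !mxE sgz_ge0.
  have := Hnsc (HN ord0); rewrite /self_catalyzing negb_exists => /forallP /(_ (cols ord0)).
  rewrite (_ : (0 : 'I_1) = ord0) //.
  case: (posnP ((rs ord0).1 (cols ord0))) => [->|Hp]; first by rewrite mul0r.
  move=> Hn; have Hle : ((rs ord0).2 (cols ord0) <= (rs ord0).1 (cols ord0))%N.
    by rewrite leqNgt; apply/negP => Hl; apply: (negP Hn); apply/andP; split.
  by apply: mulr_ge0 => //; rewrite subr_ge0 lez_nat.
- by apply: Hemb.
Qed.

Lemma P_lemma n : forall (rs : 'I_n -> reaction s) (cols : 'I_n -> 'I_s),
  injective cols -> injective rs -> (forall k, rs k \in N) ->
  (forall k, ~~ is_inflow (rs k)) -> 0 <= orientation rs cols.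
Proof.
elim: n => [|n IH] rs cols Hc Hr HN Hin.
  by apply: P_noout => // k; case: k.
case: (pickP [pred k | is_outflow (rs k)]) => [i /= /outflowP [c Hi] | H0]; last first.
  by apply: P_noout => // k; apply/negbT; exact: (H0 k).
case: (pickP [pred j | cols j == c]) => [j /= /eqP Hj | H0].
  rewrite (orient_outflow Hc Hi Hj); apply: IH.
  - by move=> a b /Hc /lift_inj.
  - by move=> a b /Hr /lift_inj.
  - by move=> k; apply: HN.
  - by move=> k; apply: Hin.
by rewrite (orient_outflow0 Hi) // => j; apply/negbT; exact: (H0 j).
Qed.

End PL.

Theorem mainTheorem4 (s : nat) (N : seq (reaction s)) :
  is_CFSTR N ->
  ((exists2 r, r \in N & self_catalyzing r) -> ~ passes_JC N) /\
  ((forall r, r \in N -> ~~ self_catalyzing r) ->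
     (passes_JC N <-> forall k : nat, (2 <= k)%N -> embedded_nonneg (nonflow_sub N) k)).
Proof.
move=> [_ HCF]; split.
  move=> [r HrN /existsP [j /andP [Hp Hlt]]] JC.
  pose rs := fun _ : 'I_1 => r.
  pose cols := fun _ : 'I_1 => j.
  have Hs : (1 + s.-1)%N = s by rewrite add1n prednK // (leq_ltn_trans (leq0n j) (ltn_ord j)).
  have Hr2 : r.2 != zero_cplx s.
    by apply/eqP => E; move: Hlt; rewrite E zero_cplxE.
  have Hr1 : r.1 != zero_cplx s.
    by apply/eqP => E; move: Hp; rewrite E zero_cplxE.
  have [rs' [H1 H2 H3]] : exists rs' : 'I_s -> reaction s, [/\ injective rs',
     (forall k, (exists i, rs' k = (unit_cplx i, zero_cplx s)) \/ (exists k', rs' k = rs k')) &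
     orientation rs' id = orientation rs cols].
    apply: (ext_lemma Hs).
    - by move=> a b _; rewrite (ord1 a) (ord1 b).
    - by move=> a b _; rewrite (ord1 a) (ord1 b).
    - by move=> k i E; move: Hr2; rewrite -/(rs k) E eqxx.
  have := JC rs' H1.
  have HN : forall k, rs' k \in N.
    by move=> k; case: (H2 k) => [[i ->]|[k' ->]].
  have Hin : forall k, ~~ is_inflow (rs' k).
    move=> k; case: (H2 k) => [[i ->]|[k' ->]]; first exact: not_inflow_unit.
    by rewrite /rs /is_inflow negb_and Hr1.
  move/(_ HN Hin); rewrite H3 /orientation !det_mx11 !mxE sgz_ge0 /rs /cols.
  by rewrite pmulr_rge0 ?ltz_nat // subr_ge0 lez_nat leqNgt Hlt.
move=> Hnsc; split.
  move=> JC k Hk S rs HS Hrs Hin.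
  have Hks : (k <= s)%N by have := @leq_card _ _ S HS; rewrite !card_ord.
  have [rs' [H1 H2 H3]] : exists rs' : 'I_s -> reaction s, [/\ injective rs',
     (forall k, (exists i, rs' k = (unit_cplx i, zero_cplx s)) \/ (exists k', rs' k = rs k')) &
     orientation rs' id = orientation rs S].
    apply: (ext_lemma (subnKC Hks)) => // kk i E.
    by move: (Hin kk); rewrite mem_filter E /is_flow outflow_unit orbT.
  rewrite -H3; apply: JC => // kk; case: (H2 kk) => [[i ->]|[k' ->]] //.
  - by move: (Hin k'); rewrite mem_filter => /andP[].
  - exact: not_inflow_unit.
  - by move: (Hin k'); rewrite mem_filter /is_flow negb_or => /andP[/andP[]].
move=> Hemb rs Hr HN Hin.
by apply: (P_lemma Hnsc Hemb) => // a b.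
Qed.
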